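(* Let $G$ be a group and $\mathcal{R}$ a $G$-graded algebra (or ring). Then $\mathcal{R}$ is graded primitive with minimal graded left ideals if and only if there exist a $G$-graded division algebra (or ring) $\mathcal{D}$, a graded right vector space $V$ over $\mathcal{D}$ and a total graded subspace $W\subset V^{\mathrm{gr}*}$ such that $\mathcal{R}$ is isomorphic to a graded subalgebra (subring) of $\mathfrak{L}_W^{\mathrm{gr}}(V)$ containing $\mathfrak{F}_W^{\mathrm{gr}}(V)$. Moreover, $\mathfrak{F}_W^{\mathrm{gr}}(V)$ is the only such subalgebra (subring) that is graded simple.
   Context: A $G$-graded algebra $\mathcal{R}=\bigoplus_g\mathcal{R}_g$ satisfies $\mathcal{R}_g\mathcal{R}_h\subset\mathcal{R}_{gh}$; a graded left module $M$ satisfies $\mathcal{R}_gM_h\subset M_{gh}$. $M$ is graded simple if $\mathcal{R}M\ne0$ and $M$ has no nonzero proper graded submodules. $\mathcal{R}$ is graded primitive if it has a faithful graded simple graded left module; ''with minimal graded left ideals'' means $\mathcal{R}$ has a nonzero graded left ideal minimal among graded left ideals. $\mathcal{R}$ is graded simple if $\mathcal{R}^2\ne0$ and it has no nonzero proper graded ideals. A graded division algebra is a $G$-graded unital associative algebra whose nonzero homogeneous elements are invertible; a graded right vector space over it is a graded right module. A map $f$ between graded spaces is homogeneous of degree $h$ if $f(M_g)\subset N_{hg}$. $V^{\mathrm{gr}*}$ is the span of homogeneous $\mathcal{D}$-linear maps $V\to\mathcal{D}$, a graded left $\mathcal{D}$-space; a graded subspace $W\subset V^{\mathrm{gr}*}$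 is total if for every $0\ne v\in V$ some $w\in W$ has $w(v)\ne0$. $\operatorname{End}^{\mathrm{gr}}_{\mathcal{D}}(V)$ is the span of homogeneous $\mathcal{D}$-linear operators; $\mathfrak{L}_W^{\mathrm{gr}}(V)$ consists of those $A\in\operatorname{End}^{\mathrm{gr}}_{\mathcal{D}}(V)$ whose adjoint $f\mapsto f\circ A$ maps $W$ into $W$; $\mathfrak{F}_W^{\mathrm{gr}}(V)$ is the span of operators $v\otimes w:u\mapsto v\,w(u)$ with $v\in V$, $w\in W$ homogeneous. *)

(* Defs.v *)
From HB Require Import structures.
From mathcomp Require Import all_boot all_order all_algebra.
Set Implicit Arguments. Unset Strict Implicit. Unset Printing Implicit Defensive.
Import GRing.Theory.
Local Open Scope ring_scope.

Record group := Group {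
  gcar :> Type;
  gmul : gcar -> gcar -> gcar;
  gone : gcar;
  ginv : gcar -> gcar;
  gmulA : forall x y z, gmul x (gmul y z) = gmul (gmul x y) z;
  gmul1 : forall x, gmul gone x = x;
  gmulr1 : forall x, gmul x gone = x;
  gmulV : forall x, gmul (ginv x) x = gone;
  gmulrV : forall x, gmul x (ginv x) = gone }.

(* hom g is the homogeneous component of degree g, and M = (+)_g M_g
   (direct sum: every element is a finite sum of homogeneous elements,
   and homogeneous elements of pairwise distinct degrees are independent). *)
Definition is_grading (G : group) (M : zmodType) (hom : G -> M -> Prop) : Prop :=
  [/\ (forall g, hom g 0),
      (forall g x y, hom g x -> hom g y -> hom g (x - y)),
      (forall x : M, exists n (gs : 'I_n -> G) (xs : 'I_n -> M),
          (forall i, hom (gs i) (xs i)) /\ x = \sum_(i < n) xs i) &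
      (forall n (gs : 'I_n -> G) (xs : 'I_n -> M), injective gs ->
          (forall i, hom (gs i) (xs i)) -> \sum_(i < n) xs i = 0 ->
          forall i, xs i = 0)].

Definition graded_subset (G : group) (M : zmodType) (hom : G -> M -> Prop)
  (N : M -> Prop) : Prop :=
  forall x, N x -> exists n (gs : 'I_n -> G) (xs : 'I_n -> M),
    (forall i, hom (gs i) (xs i) /\ N (xs i)) /\ x = \sum_(i < n) xs i.

Record gring (G : group) := GRingRec {
  rcar :> zmodType;
  rmul : rcar -> rcar -> rcar;
  rmulA : forall x y z, rmul x (rmul y z) = rmul (rmul x y) z;
  rmulDl : forall x y z, rmul (x + y) z = rmul x z + rmul y z;
  rmulDr : forall x y z, rmul x (y + z) = rmul x y + rmul x z;
  rhom : G -> rcar -> Prop;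
  rhom_grading : is_grading rhom;
  rhom_mul : forall g h x y, rhom g x -> rhom h y -> rhom (gmul g h) (rmul x y) }.

Record gmodule (G : group) (R : gring G) := GModule {
  mcar :> zmodType;
  act : R -> mcar -> mcar;
  actDl : forall (r s : R) m, act (r + s) m = act r m + act s m;
  actDr : forall r m n, act r (m + n) = act r m + act r n;
  actA : forall r s m, act (rmul r s) m = act r (act s m);
  mhom : G -> mcar -> Prop;
  mhom_grading : is_grading mhom;
  mhom_act : forall g h r m, rhom g r -> mhom h m -> mhom (gmul g h) (act r m) }.

Section RingNotions.
Variables (G : group) (R : gring G).

Definition graded_submodule (M : gmodule R) (N : M -> Prop) : Prop :=
  [/\ N 0, (forall x y, N x -> N y -> N (x - y)),
      (forall r x, N x -> N (act r x)) & graded_subset (@mhom G R M) N].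

Definition graded_simple_module (M : gmodule R) : Prop :=
  (exists (r : R) (m : M), act r m <> 0) /\
  forall N : M -> Prop, graded_submodule N -> (forall x, N x -> x = 0) \/ (forall x, N x).

Definition faithful_module (M : gmodule R) : Prop :=
  forall r : R, (forall m : M, act r m = 0) -> r = 0.

Definition graded_primitive : Prop :=
  exists M : gmodule R, faithful_module M /\ graded_simple_module M.

Definition graded_left_ideal (I : R -> Prop) : Prop :=
  [/\ I 0, (forall x y, I x -> I y -> I (x - y)),
      (forall r x, I x -> I (rmul r x)) & graded_subset (@rhom G R) I].

Definition has_minimal_graded_left_ideal : Prop :=
  exists I, [/\ graded_left_ideal I, (exists x, I x /\ x <> 0) &
    forall J, graded_left_ideal J -> (exists x, J x /\ x <> 0) ->
      (forall x, J x -> I x) -> forall x, I x -> J x].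

End RingNotions.

Record gdivring (G : group) := GDivRing {
  dcar :> pzRingType;
  dhom : G -> dcar -> Prop;
  dhom_grading : is_grading dhom;
  dhom_mul : forall g h x y, dhom g x -> dhom h y -> dhom (gmul g h) (x * y);
  dhom_inv : forall g x, dhom g x -> x <> 0 -> exists y, x * y = 1 /\ y * x = 1 }.

Record gvspace (G : group) (D : gdivring G) := GVSpace {
  vcar :> zmodType;
  vscale : vcar -> D -> vcar;
  vscaleDl : forall v w a, vscale (v + w) a = vscale v a + vscale w a;
  vscaleDr : forall v (a b : D), vscale v (a + b) = vscale v a + vscale v b;
  vscaleA : forall v (a b : D), vscale v (a * b) = vscale (vscale v a) b;
  vscale1 : forall v, vscale v 1 = v;
  vhom : G -> vcar -> Prop;
  vhom_grading : is_grading vhom;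
  vhom_scale : forall g h v a, vhom g v -> dhom h a -> vhom (gmul g h) (vscale v a) }.

Section VectorNotions.
Variables (G : group) (D : gdivring G) (V : gvspace D).

Definition hom_functional (f : V -> D) (h : G) : Prop :=
  [/\ (forall v w, f (v + w) = f v + f w),
      (forall v a, f (vscale v a) = f v * a) &
      (forall g v, vhom g v -> dhom (gmul h g) (f v))].

Definition gr_dual (f : V -> D) : Prop :=
  exists n (a : 'I_n -> D) (hs : 'I_n -> G) (fs : 'I_n -> V -> D),
    (forall i, hom_functional (fs i) (hs i)) /\
    forall v, f v = \sum_(i < n) a i * fs i v.

Definition graded_dual_subspace (W : (V -> D) -> Prop) : Prop :=
  [/\ (forall f, W f -> gr_dual f),
      W (fun _ => 0),
      (forall f g, W f -> W g -> W (fun v => f v - g v)),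
      (forall a f, W f -> W (fun v => a * f v)) &
      (forall f, W f -> exists n (hs : 'I_n -> G) (fs : 'I_n -> V -> D),
         (forall i, hom_functional (fs i) (hs i) /\ W (fs i)) /\
         forall v, f v = \sum_(i < n) fs i v)].

Definition total_dual (W : (V -> D) -> Prop) : Prop :=
  forall v : V, v <> 0 -> exists w, W w /\ w v <> 0.

Definition hom_operator (T : V -> V) (h : G) : Prop :=
  [/\ (forall v w, T (v + w) = T v + T w),
      (forall v a, T (vscale v a) = vscale (T v) a) &
      (forall g v, vhom g v -> vhom (gmul h g) (T v))].

Definition gr_end (T : V -> V) : Prop :=
  exists n (hs : 'I_n -> G) (Ts : 'I_n -> V -> V),
    (forall i, hom_operator (Ts i) (hs i)) /\ forall v, T v = \sum_(i < n) Ts i v.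

Definition LW (W : (V -> D) -> Prop) (T : V -> V) : Prop :=
  gr_end T /\ forall f, W f -> W (fun v => f (T v)).

Definition FW (W : (V -> D) -> Prop) (T : V -> V) : Prop :=
  exists n (gs hs : 'I_n -> G) (vs : 'I_n -> V) (ws : 'I_n -> V -> D),
    (forall i, [/\ vhom (gs i) (vs i), W (ws i) & hom_functional (ws i) (hs i)]) /\
    forall u, T u = \sum_(i < n) vscale (vs i) (ws i u).

Definition graded_opset (S : (V -> V) -> Prop) : Prop :=
  forall T, S T -> exists n (hs : 'I_n -> G) (Ts : 'I_n -> V -> V),
    (forall i, hom_operator (Ts i) (hs i) /\ S (Ts i)) /\
    forall v, T v = \sum_(i < n) Ts i v.

Definition graded_subring_LW (W : (V -> D) -> Prop) (S : (V -> V) -> Prop) : Prop :=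
  [/\ (forall T, S T -> LW W T),
      S (fun _ => 0),
      (forall A B, S A -> S B -> S (fun v => A v - B v)),
      (forall A B, S A -> S B -> S (fun v => A (B v))) &
      graded_opset S].

Definition graded_ideal_of (S I : (V -> V) -> Prop) : Prop :=
  [/\ (forall A, I A -> S A),
      I (fun _ => 0),
      (forall A B, I A -> I B -> I (fun v => A v - B v)),
      (forall A B, S A -> I B -> I (fun v => A (B v)) /\ I (fun v => B (A v))) &
      graded_opset I].

Definition graded_simple_opring (S : (V -> V) -> Prop) : Prop :=
  (exists A B, [/\ S A, S B & exists v, A (B v) <> 0]) /\
  forall I, graded_ideal_of S I ->
    (forall A, I A -> forall v, A v = 0) \/ (forall A, S A -> I A).

(* phi : R -> S is an isomorphism of graded rings onto S
   (S graded by S_g = S /\ homogeneous operators of degree g) *)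
Definition graded_iso_onto (R : gring G) (S : (V -> V) -> Prop) (phi : R -> V -> V) : Prop :=
  [/\ (forall x y v, phi (x + y) v = phi x v + phi y v),
      (forall x y v, phi (rmul x y) v = phi x (phi y v)),
      (forall x y, (forall v, phi x v = phi y v) -> x = y) &
      ((forall x, S (phi x)) /\
       (forall T, S T -> exists x, forall v, phi x v = T v))] /\
  ((forall g x, rhom g x -> hom_operator (phi x) g) /\
   (forall g T, S T -> hom_operator T g ->
      exists x, rhom g x /\ forall v, phi x v = T v)).

End VectorNotions.

(* Main.v *)
From HB Require Import structures.
Require Import Defs.
From mathcomp Require Import all_boot all_order all_algebra.
From Stdlib Require Import Classical FunctionalExtensionality ClassicalEpsilon.
Set Implicit Arguments. Unset Strict Implicit. Unset Printing Implicit Defensive.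
Import GRing.Theory.
Local Open Scope ring_scope.


Definition extf (A : Type) n (f : 'I_n -> A) (a : A) : 'I_n.+1 -> A :=
  fun k => if unlift ord_max k is Some k' then f k' else a.

Lemma widen_lift n (k : 'I_n) : widen_ord (leqnSn n) k = lift ord_max k.
Proof. by apply/val_inj; rewrite /= /bump leqNgt ltn_ord. Qed.

Lemma extf_widen A n (f : 'I_n -> A) a k : extf f a (widen_ord (leqnSn n) k) = f k.
Proof. by rewrite /extf widen_lift liftK. Qed.

Lemma extf_max A n (f : 'I_n -> A) a : extf f a ord_max = a.
Proof. by rewrite /extf unlift_none. Qed.

Lemma sum_extf (M : zmodType) n (f : 'I_n -> M) a :
  \sum_(k < n.+1) extf f a k = \sum_(k < n) f k + a.
Proof. rewrite big_ord_recr /= extf_max; congr (_ + _); apply: eq_bigr => k _; exact: extf_widen. Qed.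

Lemma extf_inj A n (f : 'I_n -> A) a : injective f -> (forall k, f k <> a) -> injective (extf f a).
Proof.
move=> fi fa i j; rewrite /extf.
case: unliftP => [i' ->|->]; case: unliftP => [j' ->|->] //.
- by move/fi->.
- by move/fa.
- by move/esym/fa.
Qed.

Lemma extf_all A n (f : 'I_n -> A) a (P : A -> Prop) : (forall k, P (f k)) -> P a -> forall k, P (extf f a k).
Proof. by move=> H Ha k; rewrite /extf; case: unliftP. Qed.

Definition catf (A : Type) n m (f : 'I_n -> A) (g : 'I_m -> A) : 'I_(n + m) -> A :=
  fun k => match split k with inl i => f i | inr j => g j end.

Lemma sum_catf (M : zmodType) n m (f : 'I_n -> M) (g : 'I_m -> M) :
  \sum_(k < n + m) catf f g k = \sum_(k < n) f k + \sum_(k < m) g k.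
Proof.
rewrite big_split_ord /=; congr (_ + _); apply: eq_bigr => k _; rewrite /catf.
- by rewrite (unsplitK (inl _ k)).
- by rewrite (unsplitK (inr _ k)).
Qed.

Lemma catf_all A n m (f : 'I_n -> A) (g : 'I_m -> A) (P : A -> Prop) :
  (forall k, P (f k)) -> (forall k, P (g k)) -> forall k, P (catf f g k).
Proof. by move=> Hf Hg k; rewrite /catf; case: split. Qed.

Lemma catf2_all A B n m (f : 'I_n -> A) (g : 'I_m -> A) (f' : 'I_n -> B) (g' : 'I_m -> B) (P : A -> B -> Prop) :
  (forall k, P (f k) (f' k)) -> (forall k, P (g k) (g' k)) -> forall k, P (catf f g k) (catf f' g' k).
Proof. by move=> Hf Hg k; rewrite /catf; case: split. Qed.

Lemma sum_ne0 (M : zmodType) n (xs : 'I_n -> M) : \sum_(i < n) xs i <> 0 -> exists i, xs i <> 0.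
Proof.
move=> H; apply: NNPP => H'; apply: H; apply: big1 => i _.
by apply: NNPP => Hi; apply: H'; exists i.
Qed.

Lemma choice_fun (A B : Type) (P : A -> B -> Prop) : (forall a, exists b, P a b) -> exists f, forall a, P a (f a).
Proof.
move=> H; exists (fun a => proj1_sig (constructive_indefinite_description _ (H a))).
by move=> a; exact: proj2_sig.
Qed.

Section Grp.
Variable G : group.
Lemma gcancelr (a b c : G) : gmul a c = gmul b c -> a = b.
Proof.
move=> H; have := f_equal (fun x => gmul x (ginv c)) H.
by rewrite -!gmulA gmulrV !gmulr1.
Qed.
Lemma gcancell (a b c : G) : gmul c a = gmul c b -> a = b.
Proof.
move=> H; have := f_equal (fun x => gmul (ginv c) x) H.
by rewrite !gmulA gmulV !gmul1.
Qed.
End Grp.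

Section Grading.
Variables (G : group) (M : zmodType) (hom : G -> M -> Prop) (Hg : is_grading hom).

Lemma hom0 g : hom g 0. Proof. by case: Hg. Qed.
Lemma homB g x y : hom g x -> hom g y -> hom g (x - y). Proof. by case: Hg => _ H _ _; apply: H. Qed.
Lemma homN g x : hom g x -> hom g (- x).
Proof. by move=> Hx; rewrite -sub0r; apply: homB => //; apply: hom0. Qed.
Lemma homD g x y : hom g x -> hom g y -> hom g (x + y).
Proof. by move=> Hx Hy; rewrite -[y]opprK; apply: homB => //; apply: homN. Qed.
Lemma hom_sum0 g n (xs : 'I_n -> M) : (forall i, xs i = 0 \/ hom g (xs i)) -> hom g (\sum_(i < n) xs i).
Proof.
move=> H; apply: big_ind => //; first exact: hom0; first exact: homD.
by move=> i _; case: (H i) => // ->; apply: hom0.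
Qed.
Lemma decomp (x : M) : exists n (gs : 'I_n -> G) (xs : 'I_n -> M),
  (forall i, hom (gs i) (xs i)) /\ x = \sum_(i < n) xs i.
Proof. by case: Hg. Qed.
Lemma indep n (gs : 'I_n -> G) (xs : 'I_n -> M) : injective gs ->
  (forall i, hom (gs i) (xs i)) -> \sum_(i < n) xs i = 0 -> forall i, xs i = 0.
Proof. by case: Hg => _ _ _ H; apply: H. Qed.

Lemma hom_decomp_ne0 (x : M) : x <> 0 -> exists g y, hom g y /\ y <> 0.
Proof.
move=> x0; have [n [gs [xs [H1 H2]]]] := decomp x.
have [i Hi] : exists i, xs i <> 0 by apply: sum_ne0; rewrite -H2.
by exists (gs i), (xs i).
Qed.

Lemma gmerge (P : M -> Prop) : P 0 -> (forall x y, P x -> P y -> P (x - y)) ->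
  forall n (gs : 'I_n -> G) (xs : 'I_n -> M), (forall i, hom (gs i) (xs i) /\ P (xs i)) ->
  exists m (gs' : 'I_m -> G) (xs' : 'I_m -> M), [/\ injective gs',
    (forall i, hom (gs' i) (xs' i) /\ P (xs' i)) & \sum_(i < n) xs i = \sum_(i < m) xs' i].
Proof.
move=> P0 PB.
have PD x y : P x -> P y -> P (x + y).
  move=> Hx Hy; have ->: x + y = x - (0 - y) by rewrite sub0r opprK.
  by apply: (PB) => //; apply: (PB).
elim=> [|n IH] gs xs H.
  by exists 0%N, gs, xs; split => // -[].
have [m [gs' [xs' [Hi Hh Hs]]]] := IH (fun k => gs (widen_ord (leqnSn n) k)) (fun k => xs (widen_ord (leqnSn n) k)) (fun k => H _).
rewrite big_ord_recr /= Hs.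
case: (classic (exists j, gs' j = gs ord_max)) => [[j Hj]|Hn].
  exists m, gs', (fun k => if k == j then xs' k + xs ord_max else xs' k); split => //.
    move=> k; case: eqP => [->|_] //; case: (Hh j) => h1 h2; case: (H ord_max) => h3 h4.
    by split; [apply: homD => //; rewrite Hj|apply: PD].
  rewrite [RHS](bigD1 j) //= eqxx [X in _ = _ + X](eq_bigr (fun k => xs' k)); last by move=> k /negbTE ->.
  by rewrite [in LHS](bigD1 j) //= addrAC.
exists m.+1, (extf gs' (gs ord_max)), (extf xs' (xs ord_max)); split.
- by apply: extf_inj => // k Hk; apply: Hn; exists k.
- move=> k; rewrite /extf; case: unliftP => [k' _|_] //; exact: H.
- by rewrite sum_extf.
Qed.

Lemma extract n (gs : 'I_n -> G) (xs : 'I_n -> M) g y : injective gs ->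
  (forall i, hom (gs i) (xs i)) -> hom g y -> \sum_(i < n) xs i = y ->
  (forall i, gs i <> g -> xs i = 0) /\ (forall i, gs i = g -> xs i = y).
Proof.
move=> gi Hh Hy Hs.
case: (classic (exists j, gs j = g)) => [[j Hj]|Hn].
  pose xs' k := if k == j then xs k - y else xs k.
  have H0 : forall k, xs' k = 0.
    apply: (indep gi) => [k|]; first by rewrite /xs'; case: eqP => [->|] //; apply: homB => //; rewrite Hj.
    rewrite (bigD1 j) //= /xs' eqxx (eq_bigr (fun k => xs k)); last by move=> k /negbTE ->.
    by rewrite -Hs (bigD1 j) //= opprD addrA subrr add0r addNr.
  split=> i Hi.
    have ij : i != j by apply/eqP=> E; apply: Hi; rewrite E.
    by have := H0 i; rewrite /xs' (negbTE ij).
  have ij : i = j by apply: gi; rewrite Hi.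
  by have := H0 i; rewrite /xs' ij eqxx => /eqP; rewrite subr_eq0 => /eqP.
have Hall : forall k, hom (extf gs g k) (extf xs (-y) k).
  by move=> k; rewrite /extf; case: unliftP => [k' _|_] //; apply: homN.
have H0 := indep (extf_inj gi (fun k Hk => Hn (ex_intro _ k Hk))) Hall.
have {H0} H0 := H0 (ltac:(by rewrite sum_extf Hs subrr)).
split => i Hi; last by case: Hn; exists i.
by have := H0 (widen_ord (leqnSn n) i); rewrite extf_widen.
Qed.
Lemma decomp_inj (x : M) : exists n (gs : 'I_n -> G) (xs : 'I_n -> M),
  [/\ injective gs, (forall i, hom (gs i) (xs i)) & x = \sum_(i < n) xs i].
Proof.
have [n [gs [xs [H1 H2]]]] := decomp x.
have [m [gs' [xs' [Hi Hh Hs]]]] := gmerge (P := fun _ => True) I (fun _ _ _ _ => I) (fun i => conj (H1 i) I).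
by exists m, gs', xs'; split => // [i|]; [case: (Hh i)|rewrite H2].
Qed.
End Grading.


Section Div.
Variables (G : group) (D : gdivring G).
Let Hg := dhom_grading D.

Lemma D1hom : dhom (gone G) (1 : D).
Proof.
have [n [gs [xs [gi Hh E]]]] := decomp_inj Hg 1.
have Zx : forall i, gs i <> (gone G) -> forall h x, dhom h x -> xs i * x = 0.
  move=> i Hi h x Hx.
  have [H1 _] := extract Hg (gs := fun k => gmul (gs k) h) (xs := fun k => xs k * x) (g := h) (y := x)
    (fun a b E2 => gi _ _ (gcancelr E2)) (fun k => dhom_mul (Hh k) Hx) Hx
    ltac:(by rewrite -mulr_suml -E mul1r).
  apply: H1 => E2; apply: Hi; apply: (@gcancelr _ _ _ h); by rewrite gmul1.
have Z : forall i, gs i <> (gone G) -> xs i = 0.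
  move=> i Hi; rewrite -[xs i]mulr1 [X in _ * X]E mulr_sumr; apply: big1 => k _.
  exact: (Zx i Hi _ _ (Hh k)).
rewrite E; apply: hom_sum0 => // i.
by case: (classic (gs i = (gone G))) => [<-|H]; [right|left; apply: Z].
Qed.

Lemma Dinv_hom g (x : D) : dhom g x -> x <> 0 -> exists y, [/\ dhom (ginv g) y, x * y = 1 & y * x = 1].
Proof.
move=> Hx x0; have [y [H1 H2]] := dhom_inv Hx x0.
exists y; split => //.
have [n [gs [ys [gi Hh E]]]] := decomp_inj Hg y.
have [Z _] := extract Hg (gs := fun k => gmul g (gs k)) (xs := fun k => x * ys k) (g := (gone G)) (y := 1)
    (fun a b E2 => gi _ _ (gcancell E2)) (fun k => dhom_mul Hx (Hh k)) D1hom
    ltac:(by rewrite -mulr_sumr -E).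
rewrite E; apply: hom_sum0 => // i.
case: (classic (gs i = ginv g)) => [<-|H]; [right => //|left].
have : x * ys i = 0.
  apply: Z => E2; apply: H; apply: (@gcancell _ _ _ g); by rewrite E2 gmulrV.
by move=> E3; rewrite -[ys i]mul1r -H2 -mulrA E3 mulr0.
Qed.
End Div.

Section Vec.
Variables (G : group) (D : gdivring G) (V : gvspace D).

Lemma vs0l (a : D) : vscale (0 : V) a = 0.
Proof. by apply: (addrI (vscale (0:V) a)); rewrite -vscaleDl !addr0. Qed.
Lemma vsNl (v : V) a : vscale (- v) a = - vscale v a.
Proof. by apply: (addrI (vscale v a)); rewrite -vscaleDl !subrr vs0l. Qed.
Lemma vsBl (v w : V) a : vscale (v - w) a = vscale v a - vscale w a.
Proof. by rewrite vscaleDl vsNl. Qed.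
Lemma vs_suml n (vs : 'I_n -> V) a : vscale (\sum_(i < n) vs i) a = \sum_(i < n) vscale (vs i) a.
Proof. exact: (big_morph (fun v : V => vscale v a) (fun x y => vscaleDl x y a) (vs0l a)). Qed.
Lemma vs0r (v : V) : vscale v 0 = 0.
Proof. by apply: (addrI (vscale v 0)); rewrite -vscaleDr !addr0. Qed.
Lemma vsNr (v : V) (a : D) : vscale v (- a) = - vscale v a.
Proof. by apply: (addrI (vscale v a)); rewrite -vscaleDr !subrr vs0r. Qed.
Lemma vs_sumr (v : V) n (as_ : 'I_n -> D) : vscale v (\sum_(i < n) as_ i) = \sum_(i < n) vscale v (as_ i).
Proof. exact: (big_morph (fun a : D => vscale v a) (fun x y => vscaleDr v x y) (vs0r v)). Qed.
Lemma vs_ne0 (v : V) (a b : D) : v <> 0 -> a * b = 1 -> vscale v a <> 0.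
Proof. by move=> v0 ab E; apply: v0; rewrite -[v]vscale1 -ab vscaleA E vs0l. Qed.
Lemma one_ne0 : (exists v : V, v <> 0) -> (1 : D) <> 0.
Proof. by move=> [v v0] E; apply: v0; rewrite -[v]vscale1 E vs0r. Qed.

Lemma hom_ne0 : (exists v : V, v <> 0) -> exists k (u : V), vhom k u /\ u <> 0.
Proof. by move=> [v v0]; apply: (hom_decomp_ne0 (vhom_grading V) v0). Qed.

Lemma add0 (M N : zmodType) (f : M -> N) : (forall x y, f (x + y) = f x + f y) -> f 0 = 0.
Proof. by move=> H; apply: (addrI (f 0)); rewrite -H !addr0. Qed.
Lemma addN (M N : zmodType) (f : M -> N) : (forall x y, f (x + y) = f x + f y) -> forall x, f (- x) = - f x.
Proof. by move=> H x; apply: (addrI (f x)); rewrite -H !subrr (add0 H). Qed.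
Lemma addB (M N : zmodType) (f : M -> N) : (forall x y, f (x + y) = f x + f y) -> forall x y, f (x - y) = f x - f y.
Proof. by move=> H x y; rewrite H (addN H). Qed.
Lemma add_sum (M N : zmodType) (f : M -> N) : (forall x y, f (x + y) = f x + f y) ->
  forall n (xs : 'I_n -> M), f (\sum_(i < n) xs i) = \sum_(i < n) f (xs i).
Proof. by move=> H n xs; apply: (big_morph f H (add0 H)). Qed.

Lemma gr_end_add (T : V -> V) : gr_end T -> forall x y, T (x + y) = T x + T y.
Proof.
move=> [n [hs [Ts [H1 H2]]]] x y; rewrite !H2 -big_split /=; apply: eq_bigr => i _.
by case: (H1 i) => -> _ _.
Qed.
Lemma gr_end_scale (T : V -> V) : gr_end T -> forall v a, T (vscale v a) = vscale (T v) a.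
Proof.
move=> [n [hs [Ts [H1 H2]]]] v a; rewrite !H2 vs_suml; apply: eq_bigr => i _.
by case: (H1 i) => _ -> _.
Qed.
Lemma hom_op_gr_end (T : V -> V) h : hom_operator T h -> gr_end T.
Proof. move=> H; exists 1%N, (fun _ => h), (fun _ => T); split => // v; by rewrite big_ord1. Qed.

Definition rank1 (x : V) (w : V -> D) : V -> V := fun t => vscale x (w t).

Lemma rank1_hom g h (x : V) w : vhom g x -> hom_functional w h -> hom_operator (rank1 x w) (gmul g h).
Proof.
move=> Hx [H1 H2 H3]; split => [v v'|v a|k v Hv]; rewrite /rank1.
- by rewrite H1 vscaleDr.
- by rewrite H2 vscaleA.
- by rewrite -gmulA; apply: vhom_scale => //; apply: H3.
Qed.

Variable W : (V -> D) -> Prop.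

Lemma FW_ext (T T' : V -> V) : (forall u, T u = T' u) -> FW W T -> FW W T'.
Proof.
move=> E [n [gs [hs [vs [ws [H1 H2]]]]]]; exists n, gs, hs, vs, ws; split => // u.
by rewrite -E.
Qed.

Lemma FW0 : FW W (fun _ => 0).
Proof.
exists 0%N, (fun _ => gone G), (fun _ => gone G), (fun _ => 0), (fun _ _ => 0).
by split => [[]//|u]; rewrite big_ord0.
Qed.

Lemma FW_opp T : FW W T -> FW W (fun u => - T u).
Proof.
move=> [n [gs [hs [vs [ws [H1 H2]]]]]]; exists n, gs, hs, (fun i => - vs i), ws; split => [i|u].
  by case: (H1 i) => a b c; split => //; exact: (homN (vhom_grading V) a).
by rewrite H2 -sumrN; apply: eq_bigr => i _; rewrite vsNl.
Qed.

Lemma FW_add T T' : FW W T -> FW W T' -> FW W (fun u => T u + T' u).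
Proof.
move=> [n [gs [hs [vs [ws [H1 H2]]]]]] [m [gs' [hs' [vs' [ws' [H1' H2']]]]]].
exists (n + m)%N, (catf gs gs'), (catf hs hs'), (catf vs vs'), (catf ws ws'); split => [k|u].
  by rewrite /catf; case: split => i; [exact: H1|exact: H1'].
rewrite H2 H2' -(sum_catf (fun i => vscale (vs i) (ws i u)) (fun i => vscale (vs' i) (ws' i u))).
by apply: eq_bigr => k _; rewrite /catf; case: split.
Qed.

Lemma FW_sub T T' : FW W T -> FW W T' -> FW W (fun u => T u - T' u).
Proof. by move=> H H'; apply: FW_add => //; apply: FW_opp. Qed.

Lemma FW_sum n (Ts : 'I_n -> V -> V) : (forall i, FW W (Ts i)) -> FW W (fun u => \sum_(i < n) Ts i u).
Proof.
elim: n Ts => [|n IH] Ts H.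
  by apply: (FW_ext _ FW0) => u; rewrite big_ord0.
apply: (FW_ext (T := fun u => \sum_(i < n) Ts (widen_ord (leqnSn n) i) u + Ts ord_max u)).
  by move=> u; rewrite big_ord_recr.
by apply: FW_add => //; apply: IH.
Qed.

Lemma FW_rank1 (x : V) w h : W w -> hom_functional w h -> FW W (rank1 x w).
Proof.
move=> Ww Hw; have [n [gs [xs [H1 H2]]]] := decomp (vhom_grading V) x.
exists n, gs, (fun _ => h), xs, (fun _ => w); split => // u.
by rewrite /rank1 H2 vs_suml.
Qed.

Hypothesis HW : graded_dual_subspace W.
Hypothesis HT : total_dual W.

Lemma W_hom_ne (u : V) : u <> 0 -> exists h w, [/\ W w, hom_functional w h & w u <> 0].
Proof.
move=> u0; have [w [Ww wu]] := HT u0.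
case: HW => _ _ _ _ H5; have [n [hs [fs [H1 H2]]]] := H5 w Ww.
rewrite H2 in wu; have [i Hi] := sum_ne0 wu.
by exists (hs i), (fs i); case: (H1 i).
Qed.

Lemma trans k (u : V) : vhom k u -> u <> 0 -> exists h w, [/\ W w, hom_functional w h & w u = 1].
Proof.
move=> Hu u0; have [h [w [Ww [f1 f2 f3] wu]]] := W_hom_ne u0.
have hc := f3 _ _ Hu.
have [ci [Hci _ Hci2]] := Dinv_hom hc wu.
exists (gmul (ginv (gmul h k)) h), (fun v => ci * w v); split => //.
- by case: HW => _ _ _ H4 _; apply: H4.
- split => [v v'|v a|g v Hv]; first by rewrite f1 mulrDr.
  + by rewrite f2 mulrA.
  + by rewrite -gmulA; apply: dhom_mul => //; apply: f3.
Qed.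

Lemma rank1_at (x u : V) w : w u = 1 -> rank1 x w u = x.
Proof. by move=> E; rewrite /rank1 E vscale1. Qed.

End Vec.


Section Part2.
Variables (G : group) (D : gdivring G) (V : gvspace D) (W : (V -> D) -> Prop).

Lemma hf_comp (w : V -> D) h (T : V -> V) g :
  hom_functional w h -> hom_operator T g -> hom_functional (fun v => w (T v)) (gmul h g).
Proof.
move=> [f1 f2 f3] [t1 t2 t3]; split => [v v'|v a|k v Hv].
- by rewrite t1 f1.
- by rewrite t2 f2.
- by rewrite -gmulA; apply: f3; apply: t3.
Qed.

Lemma FW_ideal (S : (V -> V) -> Prop) : graded_subring_LW W S -> (forall T, FW W T -> S T) ->
  graded_ideal_of S (FW W).
Proof.
move=> [SL S0 SB SM Sg] FS; split => //.
- exact: FW0.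
- by move=> A B; apply: FW_sub.
- move=> A B SA [n [gs [hs [vs [ws [H1 H2]]]]]].
  have [ge _] := SL A SA.
  split.
    apply: (FW_ext (T := fun u => \sum_(i < n) rank1 (A (vs i)) (ws i) u)).
      move=> u; rewrite H2 (add_sum (gr_end_add ge)); apply: eq_bigr => i _.
      by rewrite gr_end_scale.
    by apply: FW_sum => i; case: (H1 i) => _ Wi Hi; apply: FW_rank1 Wi Hi.
  have [m [hs' [Ts [T1 T2]]]] := Sg A SA.
  apply: (FW_ext (T := fun u => \sum_(i < n) \sum_(j < m) rank1 (vs i) (fun v => ws i (Ts j v)) u)).
    move=> u; rewrite H2; apply: eq_bigr => i _.
    case: (H1 i) => _ _ [f1 _ _].
    by rewrite T2 (add_sum f1) vs_sumr.
  apply: FW_sum => i; apply: FW_sum => j.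
  case: (H1 i) => _ Wi Hi; case: (T1 j) => Hj Sj.
  apply: (@FW_rank1 _ _ _ _ _ _ (gmul (hs i) (hs' j))); last exact: hf_comp.
  by have [_ HL] := SL _ Sj; apply: HL.
- move=> T [n [gs [hs [vs [ws [H1 H2]]]]]].
  exists n, (fun i => gmul (gs i) (hs i)), (fun i => rank1 (vs i) (ws i)); split => // i.
  case: (H1 i) => Hv Wi Hi; split; first exact: rank1_hom.
  exact: FW_rank1 Wi Hi.
Qed.

Lemma ideal_add (S I : (V -> V) -> Prop) : graded_ideal_of S I -> forall A B, I A -> I B -> I (fun u => A u + B u).
Proof.
move=> [_ I0 IB _ _] A B HA HB.
have -> : (fun u => A u + B u) = (fun u => A u - ((fun _ => 0) u - B u)).
  by apply: functional_extensionality => u; rewrite sub0r opprK.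
by apply: (IB) => //; apply: (IB).
Qed.

Lemma ideal_sum (S I : (V -> V) -> Prop) : graded_ideal_of S I -> forall n (Ts : 'I_n -> V -> V),
  (forall i, I (Ts i)) -> I (fun u => \sum_(i < n) Ts i u).
Proof.
move=> HI; elim=> [|n IH] Ts H.
  have -> : (fun u => \sum_(i < 0) Ts i u) = (fun _ => 0) by apply: functional_extensionality => u; rewrite big_ord0.
  by case: HI.
have -> : (fun u => \sum_(i < n.+1) Ts i u) = (fun u => \sum_(i < n) Ts (widen_ord (leqnSn n) i) u + Ts ord_max u).
  by apply: functional_extensionality => u; rewrite big_ord_recr.
apply: ideal_add; [exact: HI| |exact: H]. exact: (IH (fun i => Ts (widen_ord (leqnSn n) i))). 
Qed.

Hypothesis Hv : exists v : V, v <> 0.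
Hypothesis HW : graded_dual_subspace W.
Hypothesis HT : total_dual W.

Lemma FW_witness : exists k (u : V) h w, [/\ vhom k u, u <> 0, W w, hom_functional w h & w u = 1].
Proof.
have [k [u [Hu u0]]] := hom_ne0 Hv.
have [h [w [Ww Hw wu]]] := trans HW HT Hu u0.
by exists k, u, h, w.
Qed.

Lemma part2 (S : (V -> V) -> Prop) : graded_subring_LW W S -> (forall T, FW W T -> S T) ->
  (graded_simple_opring S <-> forall T, S T <-> FW W T).
Proof.
move=> HS FS; have [k [u [h [w [Hu u0 Ww Hw wu]]]]] := FW_witness.
have Fr := FW_rank1 u Ww Hw.
split.
  move=> [_ Hsimp] T; split; last exact: FS.
  case: (Hsimp _ (FW_ideal HS FS)) => [H|H]; last exact: H.
  by exfalso; apply: u0; rewrite -(rank1_at u wu); apply: H.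
move=> E; split.
  exists (rank1 u w), (rank1 u w); split; try exact: FS.
  by exists u; rewrite !rank1_at.
move=> I HI; case: (classic (forall A, I A -> forall v, A v = 0)) => [H|H]; [by left|right].
have [A [v [IA Av]]] : exists A v, I A /\ A v <> 0.
  apply: NNPP => H'; apply: H => A IA v; apply: NNPP => Av; apply: H'; by exists A, v.
have HI' := HI; case: HI' => IS I0 IB IM Ig.
have [m [hs [Ts [T1 T2]]]] := Ig A IA.
rewrite T2 in Av; have [j Hj] := sum_ne0 Av.
case: (T1 j) => Thom ITj.
have [n0 [gs0 [vs0 [V1 V2]]]] := decomp (vhom_grading V) v.
rewrite V2 in Hj; case: (Thom) => t1 t2 t3.
rewrite (add_sum t1) in Hj; have [i Hi] := sum_ne0 Hj.
have Hz := t3 _ _ (V1 i).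
have [h' [w' [Ww' Hw' wz]]] := trans HW HT Hz Hi.
move=> B SB; have [n [gs [hs1 [vs [ws [H1 H2]]]]]] := (proj1 (E B)) SB.
have -> : B = (fun t => \sum_(l < n) rank1 (vs l) (ws l) t) by apply: functional_extensionality => t; rewrite H2.
apply: (ideal_sum HI) => l.
case: (H1 l) => Hvl Wl Hl.
have S1 : S (rank1 (vs0 i) (ws l)) by apply: FS; apply: FW_rank1 Wl Hl.
have S2 : S (rank1 (vs l) w') by apply: FS; apply: FW_rank1 Ww' Hw'.
have I1 := proj2 (IM _ _ S1 ITj).
have I2 := proj1 (IM _ _ S2 I1).
have -> : rank1 (vs l) (ws l) = (fun t => rank1 (vs l) w' (Ts j (rank1 (vs0 i) (ws l) t))); last exact: I2.
apply: functional_extensionality => t; rewrite /rank1 t2.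
by case: Hw' => _ -> _; rewrite wz mul1r.
Qed.
End Part2.


Lemma pred_sum (M : zmodType) (P : M -> Prop) : P 0 -> (forall x y, P x -> P y -> P (x - y)) ->
  forall n (xs : 'I_n -> M), (forall i, P (xs i)) -> P (\sum_(i < n) xs i).
Proof.
move=> P0 PB n xs H; apply: big_ind => // x y Hx Hy.
have ->: x + y = x - (0 - y) by rewrite sub0r opprK.
by apply: (PB) => //; apply: (PB).
Qed.

Section Back.
Variables (G : group) (R : gring G) (D : gdivring G) (V : gvspace D) (W : (V -> D) -> Prop).
Hypothesis Hv : exists v : V, v <> 0.
Hypothesis HW : graded_dual_subspace W.
Hypothesis HT : total_dual W.
Variables (S : (V -> V) -> Prop) (phi : R -> V -> V).
Hypothesis HS : graded_subring_LW W S.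
Hypothesis FS : forall T, FW W T -> S T.
Hypothesis Hphi : graded_iso_onto S phi.

Let pD : forall x y v, phi (x + y) v = phi x v + phi y v. Proof. by case: Hphi => -[]. Qed.
Let pM : forall x y v, phi (rmul x y) v = phi x (phi y v). Proof. by case: Hphi => -[]. Qed.
Let pinj : forall x y, (forall v, phi x v = phi y v) -> x = y. Proof. by case: Hphi => -[]. Qed.
Let pS : forall x, S (phi x). Proof. by case: Hphi => -[] _ _ _ []. Qed.
Let Sp : forall T, S T -> exists x, forall v, phi x v = T v. Proof. by case: Hphi => -[] _ _ _ []. Qed.
Let phom : forall g x, rhom g x -> hom_operator (phi x) g. Proof. by case: Hphi => _ []. Qed.
Let homp : forall g T, S T -> hom_operator T g -> exists x, rhom g x /\ forall v, phi x v = T v.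
Proof. by case: Hphi => _ []. Qed.

Let pge x : gr_end (phi x). Proof. by case: HS => SL _ _ _ _; case: (SL _ (pS x)). Qed.
Let padd x : forall u v, phi x (u + v) = phi x u + phi x v. Proof. exact: gr_end_add (pge x). Qed.
Let pscale x : forall v a, phi x (vscale v a) = vscale (phi x v) a. Proof. exact: gr_end_scale (pge x). Qed.
Let p0 v : phi 0 v = 0. Proof. exact: (add0 (f := fun r => phi r v) (fun x y => pD x y v)). Qed.
Let pB x y v : phi (x - y) v = phi x v - phi y v.
Proof. exact: (addB (f := fun r => phi r v) (fun x y => pD x y v)). Qed.
Let psum n (xs : 'I_n -> R) v : phi (\sum_(i < n) xs i) v = \sum_(i < n) phi (xs i) v.
Proof. exact: (add_sum (f := fun r => phi r v) (fun x y => pD x y v)). Qed.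

Let rank1S (x : V) w h : W w -> hom_functional w h -> exists r, forall v, phi r v = rank1 x w v.
Proof. by move=> Ww Hw; apply: Sp; apply: FS; apply: FW_rank1 Ww Hw. Qed.

Definition Vmod : gmodule R :=
  @GModule G R V phi pD padd pM _ (vhom_grading V)
    (fun g h r m Hr Hm => match phom Hr with And3 _ _ H3 => H3 _ _ Hm end).

Lemma back_primitive : graded_primitive R.
Proof.
exists Vmod; split.
  by move=> r H; apply: pinj => v; rewrite p0; apply: H.
have [k [u [h [w [Hu u0 Ww Hw wu]]]]] := FW_witness Hv HW HT.
split.
  have [r Hr] := rank1S u Ww Hw.
  by exists r, u; rewrite /= Hr rank1_at.
move=> N [N0 NB Nact Ngr].
case: (classic (forall x, N x -> x = 0)) => [H|H]; [by left|right].
have [x [Nx x0]] : exists x, N x /\ x <> 0.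
  apply: NNPP => H'; apply: H => x Nx; apply: NNPP => x0; apply: H'; by exists x.
have [n [gs [xs [H1 H2]]]] := Ngr x Nx.
rewrite H2 in x0; have [i Hi] := sum_ne0 x0.
case: (H1 i) => Hh Ni.
have [h' [w' [Ww' Hw' wu']]] := trans HW HT Hh Hi.
move=> t; have [m [gt [ts [T1 T2]]]] := decomp (vhom_grading V) t.
rewrite T2; apply: pred_sum => // j.
have [r Hr] := rank1S (ts j) Ww' Hw'.
have := Nact r (xs i) Ni; by rewrite /= Hr rank1_at.
Qed.

Lemma back_minimal : has_minimal_graded_left_ideal R.
Proof.
have [k0 [v0 [h0 [w0 [Hv0 v00 Ww0 Hw0 wv0]]]]] := FW_witness Hv HW HT.
pose I x := exists u : V, forall t, phi x t = vscale u (w0 t).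
exists I; split.
- split.
  + by exists 0 => t; rewrite p0 vs0l.
  + move=> x y [u1 H1] [u2 H2]; exists (u1 - u2) => t; by rewrite pB H1 H2 vsBl.
  + move=> r x [u H]; exists (phi r u) => t; by rewrite pM H pscale.
  + move=> x [u H].
    have [n [gs [us [U1 U2]]]] := decomp (vhom_grading V) u.
    have [f Hf] := choice_fun (fun j => homp (FS (FW_rank1 (us j) Ww0 Hw0)) (rank1_hom (U1 j) Hw0)).
    exists n, (fun j => gmul (gs j) h0), f; split.
      move=> j; case: (Hf j) => Hr Hp; split => //; exists (us j) => t; exact: Hp.
    apply: pinj => t; rewrite psum H U2 vs_suml; apply: eq_bigr => j _.
    by case: (Hf j) => _ ->.
- have [x Hx] := rank1S v0 Ww0 Hw0.
  exists x; split; first by exists v0.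
  move=> E; apply: v00; by rewrite -(rank1_at v0 wv0) -Hx E p0.
move=> J [J0 JB Jl Jg] [y [Jy y0]] JI x [q Hq].
have [n [gs [ys [H1 H2]]]] := Jg y Jy.
rewrite H2 in y0; have [i Hi] := sum_ne0 y0.
case: (H1 i) => Hh Ji.
have [u' Hu'] := JI _ Ji.
have E1 : phi (ys i) v0 = u' by rewrite Hu' wv0 vscale1.
have hu' : vhom (gmul (gs i) k0) u' by rewrite -E1; case: (phom Hh) => _ _ H3; apply: H3.
have u'0 : u' <> 0.
  move=> E; apply: Hi; apply: pinj => t; by rewrite Hu' E vs0l p0.
have [h1 [w1 [Ww1 Hw1 wu1]]] := trans HW HT hu' u'0.
have [m [gq [qs [Q1 Q2]]]] := decomp (vhom_grading V) q.
have [f Hf] := choice_fun (fun j => rank1S (qs j) Ww1 Hw1).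
have -> : x = \sum_(j < m) rmul (f j) (ys i).
  apply: pinj => t; rewrite psum Hq Q2 vs_suml; apply: eq_bigr => j _.
  by rewrite pM Hu' pscale Hf rank1_at.
by apply: pred_sum => // j; apply: Jl.
Qed.

End Back.


Section RL.
Variables (G : group) (R : gring G).
Lemma rmul0r (x : R) : rmul 0 x = 0. Proof. exact: (add0 (f := fun y => rmul y x) (fun a b => rmulDl a b x)). Qed.
Lemma rmulr0 (x : R) : rmul x 0 = 0. Proof. exact: (add0 (rmulDr x)). Qed.
Lemma rmulNl (x y : R) : rmul (- x) y = - rmul x y. Proof. exact: (addN (f := fun a => rmul a y) (fun a b => rmulDl a b y)). Qed.
Lemma rmulNr (x y : R) : rmul x (- y) = - rmul x y. Proof. exact: (addN (rmulDr x)). Qed.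
Lemma rmulBl (x y z : R) : rmul (x - y) z = rmul x z - rmul y z. Proof. by rewrite rmulDl rmulNl. Qed.
Lemma rmulBr (x y z : R) : rmul x (y - z) = rmul x y - rmul x z. Proof. by rewrite rmulDr rmulNr. Qed.
Lemma rmul_suml n (xs : 'I_n -> R) y : rmul (\sum_(i < n) xs i) y = \sum_(i < n) rmul (xs i) y.
Proof. exact: (add_sum (f := fun a => rmul a y) (fun a b => rmulDl a b y)). Qed.
Lemma rmul_sumr n (xs : 'I_n -> R) y : rmul y (\sum_(i < n) xs i) = \sum_(i < n) rmul y (xs i).
Proof. exact: (add_sum (rmulDr y)). Qed.

Definition eid (e : R) : R := if rmul e e == e then e else 0.
Lemma eidE (e : R) : rmul (eid e) (eid e) = eid e.
Proof. by rewrite /eid; case: eqP => // _; rewrite rmul0r. Qed.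
End RL.

Section Corner.
Variables (G : group) (R : gring G) (e : R).
Local Notation ee := (eid e).

Definition Dty := {x : R | rmul ee (rmul x ee) == x}.
Definition Vty := {x : R | rmul x ee == x}.

Lemma Dl (x : Dty) : rmul ee (val x) = val x.
Proof. by case: x => x /= /eqP E; rewrite -E rmulA eidE. Qed.
Lemma Dr (x : Dty) : rmul (val x) ee = val x.
Proof. by case: x => x /= /eqP E; rewrite -E -!rmulA eidE. Qed.
Lemma Vr (x : Vty) : rmul (val x) ee = val x.
Proof. by case: x => x /= /eqP. Qed.

Lemma D0P : rmul ee (rmul 0 ee) == 0. Proof. by rewrite rmul0r rmulr0. Qed.
Lemma DaddP (x y : Dty) : rmul ee (rmul (val x + val y) ee) == val x + val y.
Proof. by rewrite rmulDl rmulDr !Dr !Dl. Qed.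
Lemma DoppP (x : Dty) : rmul ee (rmul (- val x) ee) == - val x.
Proof. by rewrite rmulNl rmulNr Dr Dl. Qed.
Lemma D1P : rmul ee (rmul ee ee) == ee. Proof. by rewrite !eidE. Qed.
Lemma DmulP (x y : Dty) : rmul ee (rmul (rmul (val x) (val y)) ee) == rmul (val x) (val y).
Proof. by rewrite -rmulA Dr rmulA Dl. Qed.

Definition D0 : Dty := exist _ 0 D0P.
Definition Dadd (x y : Dty) : Dty := exist _ (val x + val y) (DaddP x y).
Definition Dopp (x : Dty) : Dty := exist _ (- val x) (DoppP x).
Definition D1 : Dty := exist _ ee D1P.
Definition Dmul (x y : Dty) : Dty := exist _ (rmul (val x) (val y)) (DmulP x y).

Lemma V0P : rmul 0 ee == 0. Proof. by rewrite rmul0r. Qed.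
Lemma VaddP (x y : Vty) : rmul (val x + val y) ee == val x + val y.
Proof. by rewrite rmulDl !Vr. Qed.
Lemma VoppP (x : Vty) : rmul (- val x) ee == - val x.
Proof. by rewrite rmulNl Vr. Qed.
Definition V0 : Vty := exist _ 0 V0P.
Definition Vadd (x y : Vty) : Vty := exist _ (val x + val y) (VaddP x y).
Definition Vopp (x : Vty) : Vty := exist _ (- val x) (VoppP x).
End Corner.


HB.instance Definition _ (G : group) (R : gring G) (e : R) := Choice.on (Dty e).
HB.instance Definition _ (G : group) (R : gring G) (e : R) := Choice.on (Vty e).
HB.instance Definition _ (G : group) (R : gring G) (e : R) := SubType.on (Dty e).
HB.instance Definition _ (G : group) (R : gring G) (e : R) := SubType.on (Vty e).

Section ZLaws.
Variables (G : group) (R : gring G) (e : R).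
Lemma DaddA : associative (@Dadd G R e). Proof. by move=> x y z; apply: val_inj; rewrite /= addrA. Qed.
Lemma DaddC : commutative (@Dadd G R e). Proof. by move=> x y; apply: val_inj; rewrite /= addrC. Qed.
Lemma Dadd0 : left_id (@D0 G R e) (@Dadd G R e). Proof. by move=> x; apply: val_inj; rewrite /= add0r. Qed.
Lemma DaddN : left_inverse (@D0 G R e) (@Dopp G R e) (@Dadd G R e). Proof. by move=> x; apply: val_inj; rewrite /= addNr. Qed.
Lemma VaddA : associative (@Vadd G R e). Proof. by move=> x y z; apply: val_inj; rewrite /= addrA. Qed.
Lemma VaddC : commutative (@Vadd G R e). Proof. by move=> x y; apply: val_inj; rewrite /= addrC. Qed.
Lemma Vadd0 : left_id (@V0 G R e) (@Vadd G R e). Proof. by move=> x; apply: val_inj; rewrite /= add0r. Qed.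
Lemma VaddN : left_inverse (@V0 G R e) (@Vopp G R e) (@Vadd G R e). Proof. by move=> x; apply: val_inj; rewrite /= addNr. Qed.
End ZLaws.

HB.instance Definition _ (G : group) (R : gring G) (e : R) :=
  GRing.isZmodule.Build (Dty e) (@DaddA G R e) (@DaddC G R e) (@Dadd0 G R e) (@DaddN G R e).
HB.instance Definition _ (G : group) (R : gring G) (e : R) :=
  GRing.isZmodule.Build (Vty e) (@VaddA G R e) (@VaddC G R e) (@Vadd0 G R e) (@VaddN G R e).

Section RLaws.
Variables (G : group) (R : gring G) (e : R).
Lemma DmulA : associative (@Dmul G R e). Proof. by move=> x y z; apply: val_inj; rewrite /= rmulA. Qed.
Lemma Dmul1 : left_id (@D1 G R e) (@Dmul G R e). Proof. by move=> x; apply: val_inj; rewrite /= Dl. Qed.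
Lemma Dmulr1 : right_id (@D1 G R e) (@Dmul G R e). Proof. by move=> x; apply: val_inj; rewrite /= Dr. Qed.
Lemma DmulDl : left_distributive (@Dmul G R e) +%R. Proof. by move=> x y z; apply: val_inj; rewrite /= rmulDl. Qed.
Lemma DmulDr : right_distributive (@Dmul G R e) +%R. Proof. by move=> x y z; apply: val_inj; rewrite /= rmulDr. Qed.
End RLaws.

HB.instance Definition _ (G : group) (R : gring G) (e : R) :=
  GRing.Zmodule_isPzRing.Build (Dty e) (@DmulA G R e) (@Dmul1 G R e) (@Dmulr1 G R e) (@DmulDl G R e) (@DmulDr G R e).

Section T. Variables (G : group) (R : gring G) (e : R).
Lemma valD (x y : Dty e) : val (x + y) = val x + val y. Proof. by []. Qed.
Lemma valM (x y : Dty e) : val (x * y) = rmul (val x) (val y). Proof. by []. Qed.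
Lemma val1 : val (1 : Dty e) = eid e. Proof. by []. Qed.
Lemma val0 : val (0 : Dty e) = 0. Proof. by []. Qed.
Lemma valVD (x y : Vty e) : val (x + y) = val x + val y. Proof. by []. Qed.
Lemma valV0 : val (0 : Vty e) = 0. Proof. by []. Qed.
End T.

Section Maps.
Variables (G : group) (R : gring G) (e : R).
Local Notation ee := (eid e).
Lemma DcP (x : R) : rmul ee (rmul (rmul ee (rmul x ee)) ee) == rmul ee (rmul x ee).
Proof. by rewrite -!rmulA eidE rmulA rmulA eidE -rmulA. Qed.
Definition Dc (x : R) : Dty e := exist _ (rmul ee (rmul x ee)) (DcP x).
Lemma VcP (x : R) : rmul (rmul x ee) ee == rmul x ee.
Proof. by rewrite -rmulA eidE. Qed.
Definition Vc (x : R) : Vty e := exist _ (rmul x ee) (VcP x).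
Lemma VscP (v : Vty e) (d : Dty e) : rmul (rmul (val v) (val d)) ee == rmul (val v) (val d).
Proof. by rewrite -rmulA Dr. Qed.
Definition Vsc (v : Vty e) (d : Dty e) : Vty e := exist _ (rmul (val v) (val d)) (VscP v d).
Lemma VactP (x : R) (v : Vty e) : rmul (rmul x (val v)) ee == rmul x (val v).
Proof. by rewrite -rmulA Vr. Qed.
Definition Vact (x : R) (v : Vty e) : Vty e := exist _ (rmul x (val v)) (VactP x v).
Definition Wfun (a : R) (v : Vty e) : Dty e := Dc (rmul a (val v)).

Lemma valB (x y : Dty e) : val (x - y) = val x - val y. Proof. by []. Qed.
Lemma valVB (x y : Vty e) : val (x - y) = val x - val y. Proof. by []. Qed.
Lemma val_sum n (xs : 'I_n -> Dty e) : val (\sum_(i < n) xs i) = \sum_(i < n) val (xs i).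
Proof. exact: (@add_sum (Dty e) R (fun x => val x) (fun x y => erefl)). Qed.
Lemma valV_sum n (xs : 'I_n -> Vty e) : val (\sum_(i < n) xs i) = \sum_(i < n) val (xs i).
Proof. exact: (@add_sum (Vty e) R (fun x => val x) (fun x y => erefl)). Qed.

Lemma Vsc_Dl v a b : Vsc v (a + b) = Vsc v a + Vsc v b.
Proof. by apply: val_inj; rewrite /= rmulDr. Qed.
Lemma Vsc_Vl v w a : Vsc (v + w) a = Vsc v a + Vsc w a.
Proof. by apply: val_inj; rewrite /= rmulDl. Qed.
Lemma Vsc_A v (a b : Dty e) : Vsc v (a * b) = Vsc (Vsc v a) b.
Proof. by apply: val_inj; rewrite /= rmulA. Qed.
Lemma Vsc_1 v : Vsc v 1 = v.
Proof. by apply: val_inj; rewrite /= Vr. Qed.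
End Maps.


Section Construct.
Variables (G : group) (R : gring G) (I : R -> Prop) (e : R).
Hypothesis HI : graded_left_ideal I.
Hypothesis He : rhom (gone G) e.
Hypothesis Hee : rmul e e = e.
Hypothesis e0 : e <> 0.
Hypothesis HeI : I e.
Hypothesis HIe : forall x, I x -> rmul x e = x.
Hypothesis Imin : forall J, graded_left_ideal J -> (exists x, J x /\ x <> 0) -> (forall x, J x -> I x) -> forall x, I x -> J x.
Hypothesis Hinj : forall x, (forall i, I i -> rmul x i = 0) -> x = 0.

Let Rg := rhom_grading R.
Let eE : eid e = e. Proof. by rewrite /eid Hee eqxx. Qed.
Let I0 : I 0. Proof. by case: HI. Qed.
Let IB : forall x y, I x -> I y -> I (x - y). Proof. by case: HI. Qed.
Let IL : forall r x, I x -> I (rmul r x). Proof. by case: HI. Qed.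
Let Igr : graded_subset (@rhom G R) I. Proof. by case: HI. Qed.
Let Ie x : I (rmul x e). Proof. exact: IL. Qed.

Let Dle (d : Dty e) : rmul e (val d) = val d. Proof. by rewrite [X in rmul X _ = _](esym eE) Dl. Qed.
Let Dre (d : Dty e) : rmul (val d) e = val d. Proof. by rewrite [X in rmul _ X = _](esym eE) Dr. Qed.
Let Vre (v : Vty e) : rmul (val v) e = val v. Proof. by rewrite [X in rmul _ X = _](esym eE) Vr. Qed.

Let valDc x : val (Dc e x) = rmul e (rmul x e).
Proof. by transitivity (rmul (eid e) (rmul x (eid e))); [|rewrite eE]. Qed.
Let valVc x : val (Vc e x) = rmul x e.
Proof. by transitivity (rmul x (eid e)); [|rewrite eE]. Qed.
Let val1e : val (1 : Dty e) = e.
Proof. by transitivity (eid e); [|rewrite eE]. Qed.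

Let valMe (x y : Dty e) : val (x * y) = rmul (val x) (val y). Proof. by []. Qed.

Let Izero (J : R -> Prop) : graded_left_ideal J -> (forall x, J x -> I x) -> ~ J e -> forall x, J x -> x = 0.
Proof.
move=> HJ JI nJe x Jx; apply: NNPP => x0; apply: nJe.
exact: (Imin HJ (ex_intro _ x (conj Jx x0)) JI HeI).
Qed.

Let ehom g x : rhom g x -> rhom g (rmul e (rmul x e)).
Proof. by move=> Hx; have := rhom_mul He (rhom_mul Hx He); rewrite gmulr1 gmul1. Qed.
Let ehomr g x : rhom g x -> rhom g (rmul x e).
Proof. by move=> Hx; have := rhom_mul Hx He; rewrite gmulr1. Qed.

Definition dhomD g (d : Dty e) := rhom g (val d).

Lemma Dgrading : is_grading dhomD.
Proof.
split.
- move=> g; exact: (hom0 Rg).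
- by move=> g x y; apply: (homB Rg).
- move=> d; have [n [gs [xs [H1 H2]]]] := decomp Rg (val d).
  exists n, gs, (fun i => Dc e (xs i)); split.
    by move=> i; rewrite /dhomD valDc; apply: ehom.
  apply: val_inj; rewrite val_sum (eq_bigr _ (fun i _ => valDc (xs i))) -rmul_sumr -rmul_suml -H2.
  by rewrite Dre Dle.
- move=> n gs xs gi H Hs i; apply: val_inj.
  apply: (indep Rg gi H); by rewrite -val_sum Hs.
Qed.

Lemma Dmulhom g h (x y : Dty e) : dhomD g x -> dhomD h y -> dhomD (gmul g h) (x * y).
Proof. exact: rhom_mul. Qed.

Lemma Dinv g (x : Dty e) : dhomD g x -> x <> 0 -> exists y, x * y = 1 /\ y * x = 1.
Proof.
move=> Hx x0; set a := val x.
have a0 : a <> 0 by move=> E; apply: x0; apply: val_inj.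
have ea : rmul e a = a by apply: Dle.
have ae : rmul a e = a by apply: Dre.
pose Rd y := exists r, y = rmul r a.
have HRd : graded_left_ideal Rd.
  split.
  - by exists 0; rewrite rmul0r.
  - by move=> y1 y2 [r1 ->] [r2 ->]; exists (r1 - r2); rewrite rmulBl.
  - by move=> s y [r ->]; exists (rmul s r); rewrite rmulA.
  - move=> y [r ->]; have [n [gs [rs [H1 H2]]]] := decomp Rg r.
    exists n, (fun j => gmul (gs j) g), (fun j => rmul (rs j) a); split.
      by move=> j; split; [apply: rhom_mul|exists (rs j)].
    by rewrite H2 rmul_suml.
have RdI : forall y, Rd y -> I y by move=> y [r ->]; rewrite -ae rmulA.
have [r Er] : Rd e.
  by apply: (Imin HRd) => //; exists a; split => //; exists e; rewrite ea.
pose y0 := Dc e r.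
have y0x : y0 * x = 1.
  apply: val_inj; rewrite valMe val1e valDc.
  by rewrite -!rmulA ea -Er Hee.
pose K i := I i /\ rmul i a = 0.
have HK : graded_left_ideal K.
  split.
  - by split => //; rewrite rmul0r.
  - by move=> i j [Ii Hi] [Ij Hj]; split; [apply: IB|rewrite rmulBl Hi Hj subrr].
  - by move=> s i [Ii Hi]; split; [apply: IL|rewrite -rmulA Hi rmulr0].
  - move=> i [Ii Hi]; have [n [gs [xs [H1 H2]]]] := Igr Ii.
    have [m [gs' [xs' [gi Hh Hs]]]] := gmerge Rg I0 IB H1.
    exists m, gs', xs'; split; last by rewrite H2 Hs.
    move=> j; case: (Hh j) => h1 h2; do 2!split => //.
    apply: (indep Rg (gs := fun k => gmul (gs' k) g) (xs := fun k => rmul (xs' k) a)).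
    + by move=> k1 k2 /gcancelr /gi.
    + by move=> k; apply: rhom_mul => //; case: (Hh k).
    + by rewrite -rmul_suml -Hs -H2.
have Kz := Izero HK (fun i Ki => proj1 Ki) (fun Ke => a0 (ltac:(by rewrite -ea; case: Ke))).
exists y0; split => //.
apply: val_inj; rewrite valMe val1e.
apply/eqP; rewrite -subr_eq0; apply/eqP; apply: Kz; split.
  apply: IB => //; rewrite valDc.
  by rewrite !rmulA; apply: Ie.
by rewrite rmulBl valDc ea -!rmulA ea -Er Hee ae subrr.
Qed.

Definition Dd : gdivring G := GDivRing Dgrading Dmulhom Dinv.

Definition vhomV g (v : Vty e) := rhom g (val v).
Lemma Vgrading : is_grading vhomV.
Proof.
split.
- move=> g; exact: (hom0 Rg).
- by move=> g x y; apply: (homB Rg).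
- move=> v; have [n [gs [xs [H1 H2]]]] := decomp Rg (val v).
  exists n, gs, (fun i => Vc e (xs i)); split.
    by move=> i; rewrite /vhomV valVc; apply: ehomr.
  by apply: val_inj; rewrite valV_sum (eq_bigr _ (fun i _ => valVc (xs i))) -rmul_suml -H2 Vre.
- move=> n gs xs gi H Hs i; apply: val_inj.
  apply: (indep Rg gi H); by rewrite -valV_sum Hs.
Qed.

Lemma Vscalehom g h (v : Vty e) (a : Dd) : vhomV g v -> dhom h a -> vhomV (gmul g h) (Vsc v a).
Proof. exact: rhom_mul. Qed.

Definition Vs : gvspace Dd := @GVSpace G Dd (Vty e) (@Vsc G R e) (@Vsc_Vl G R e) (@Vsc_Dl G R e) (@Vsc_A G R e) (@Vsc_1 G R e) vhomV Vgrading Vscalehom.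


Definition Wd : (Vs -> Dd) -> Prop := fun f => exists a, rmul e a = a /\ forall v, f v = @Wfun _ _ e a v.
Definition phiV (x : R) : Vs -> Vs := @Vact _ _ e x.
Definition Sd (T : Vs -> Vs) : Prop := exists x, forall v, T v = phiV x v.

Let valW a (v : Vs) : val (@Wfun _ _ e a v) = rmul e (rmul (rmul a (val v)) e). Proof. exact: valDc. Qed.
Let valWe a (v : Vs) : rmul e a = a -> val (@Wfun _ _ e a v) = rmul a (val v).
Proof. by move=> ea; rewrite valW -rmulA Vre rmulA ea. Qed.
Let valAct x (v : Vs) : val (phiV x v) = rmul x (val v). Proof. by []. Qed.
Let valSc (v : Vs) (d : Dd) : val (vscale v d) = rmul (val v) (val d). Proof. by []. Qed.
Let valVB' (v w : Vs) : val (v - w) = val v - val w. Proof. by []. Qed.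
Let valVD' (v w : Vs) : val (v + w) = val v + val w. Proof. by []. Qed.
Let valV0' : val (0 : Vs) = 0. Proof. by []. Qed.
Let valDB' (v w : Dd) : val (v - w) = val v - val w. Proof. by []. Qed.
Let valDD' (v w : Dd) : val (v + w) = val v + val w. Proof. by []. Qed.
Let valDM' (v w : Dd) : val (v * w) = rmul (val v) (val w). Proof. by []. Qed.
Let valD0' : val (0 : Dd) = 0. Proof. by []. Qed.
Let valDsum n (xs : 'I_n -> Dd) : val (\sum_(i < n) xs i) = \sum_(i < n) val (xs i). Proof. exact: val_sum. Qed.
Let valVsum n (xs : 'I_n -> Vs) : val (\sum_(i < n) xs i) = \sum_(i < n) val (xs i). Proof. exact: valV_sum. Qed.

Lemma Wfun_hom b h : rhom h b -> hom_functional (@Wfun _ _ e b : Vs -> Dd) h.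
Proof.
move=> Hb; split => [v w|v d|g v Hv].
- by apply: val_inj; rewrite valDD' !valW valVD' rmulDr rmulDl rmulDr.
- by apply: val_inj; rewrite valDM' !valW valSc -!rmulA Dre Dle.
- by rewrite /dhom /= /dhomD valW; apply: ehom; apply: rhom_mul.
Qed.

Lemma HWd : graded_dual_subspace Wd.
Proof.
split.
- move=> f [a [ea Hf]]; have [n [gs [xs [H1 H2]]]] := decomp Rg a.
  exists n, (fun _ => 1), gs, (fun j => @Wfun _ _ e (xs j)); split.
    by move=> j; apply: Wfun_hom.
  move=> v; apply: val_inj; rewrite Hf valDsum valW.
  rewrite (eq_bigr (fun j => rmul e (rmul (rmul (xs j) (val v)) e))); last by move=> j _; rewrite mul1r valW.
  by rewrite -rmul_sumr -rmul_suml -rmul_suml -H2.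
- by exists 0; split; [rewrite rmulr0|move=> v; apply: val_inj; rewrite valW rmul0r rmul0r rmulr0].
- move=> f g [a [ea Hf]] [b [eb Hg]]; exists (a - b); split; first by rewrite rmulBr ea eb.
  by move=> v; apply: val_inj; rewrite valDB' Hf Hg !valW !rmulBl rmulBr.
- move=> c f [a [ea Hf]]; exists (rmul (val c) a); split; first by rewrite rmulA Dle.
  move=> v; apply: val_inj; rewrite valDM' Hf valWe // valWe; first by rewrite rmulA.
  by rewrite rmulA Dle.
- move=> f [a [ea Hf]]; have [n [gs [xs [H1 H2]]]] := decomp Rg a.
  exists n, gs, (fun j => @Wfun _ _ e (rmul e (xs j))); split.
    move=> j; split.
      by apply: Wfun_hom; have := rhom_mul He (H1 j); rewrite gmul1.
    by exists (rmul e (xs j)); split => //; rewrite rmulA Hee.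
  move=> v; apply: val_inj; rewrite Hf valWe // valDsum.
  rewrite (eq_bigr (fun j => rmul (rmul e (xs j)) (val v))); last by move=> j _; rewrite valWe // rmulA Hee.
  by rewrite -rmul_suml -rmul_sumr -H2 ea.
Qed.

Lemma HTd : total_dual Wd.
Proof.
move=> v v0; set x := val v.
have x0 : x <> 0 by move=> E; apply: v0; apply: val_inj.
have Ix : I x by rewrite /x -Vre; apply: Ie.
pose Ann y := [/\ I y, rmul e y = 0 & forall r, rmul e (rmul r y) = 0].
have HA : graded_left_ideal Ann.
  split.
  - by split => // [|r]; rewrite ?rmulr0.
  - move=> y z [Iy H1 H2] [Iz H1' H2']; split; first exact: IB.
      by rewrite rmulBr H1 H1' subrr.
    by move=> r; rewrite !rmulBr H2 H2' subrr.
  - move=> s y [Iy H1 H2]; split; [exact: IL|exact: H2|].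
    by move=> r; rewrite [rmul r _]rmulA H2.
  - move=> y [Iy H1 H2]; have [n [gs [xs [K1 K2]]]] := Igr Iy.
    have [m [gs' [xs' [gi Hh Hs]]]] := gmerge Rg I0 IB K1.
    exists m, gs', xs'; split; last by rewrite K2 Hs.
    move=> j; case: (Hh j) => h1 h2; split => //; split => //.
      apply: (indep Rg (gs := fun k => gmul (gone G) (gs' k)) (xs := fun k => rmul e (xs' k))).
      + by move=> k1 k2 /gcancell /gi.
      + by move=> k; apply: rhom_mul => //; case: (Hh k).
      + by rewrite -rmul_sumr -Hs -K2.
    move=> r; have [p [hs [rs [R1 R2]]]] := decomp Rg r.
    rewrite R2 rmul_suml rmul_sumr; apply: big1 => k _.
    apply: (indep Rg (gs := fun l => gmul (gone G) (gmul (hs k) (gs' l))) (xs := fun l => rmul e (rmul (rs k) (xs' l)))).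
    + by move=> k1 k2 /gcancell /gcancell /gi.
    + by move=> l; apply: rhom_mul => //; apply: rhom_mul => //; case: (Hh l).
    + by rewrite -rmul_sumr -rmul_sumr -Hs -K2.
have nAe : ~ Ann e by case=> _ H _; apply: e0; rewrite -Hee.
have nAx : ~ Ann x by move=> Ax; apply: x0; apply: (Izero HA (fun y Ay => match Ay with And3 h _ _ => h end) nAe).
case: (classic (rmul e x = 0)) => [ex|ex].
  have [r Hr] : exists r, rmul e (rmul r x) <> 0.
    apply: NNPP => H; apply: nAx; split => // r; apply: NNPP => H'; apply: H; by exists r.
  exists (@Wfun _ _ e (rmul e r)); split.
    by exists (rmul e r); split => //; rewrite rmulA Hee.
  move=> E; apply: Hr; have := f_equal val E; rewrite valWe; last by rewrite rmulA Hee.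
  by rewrite -rmulA.
exists (@Wfun _ _ e e); split; first by exists e.
by move=> E; apply: ex; have := f_equal val E; rewrite valWe.
Qed.

Lemma phiV_hom g x : rhom g x -> hom_operator (phiV x) g.
Proof.
move=> Hx; split => [v w|v a|k v Hv].
- by apply: val_inj; rewrite valVD' !valAct valVD' rmulDr.
- by apply: val_inj; rewrite valSc !valAct valSc rmulA.
- by rewrite /vhom /= /vhomV valAct; apply: rhom_mul.
Qed.

Lemma phiV_sum n (xs : 'I_n -> R) v : phiV (\sum_(i < n) xs i) v = \sum_(i < n) phiV (xs i) v.
Proof. by apply: val_inj; rewrite valAct valVsum rmul_suml. Qed.

Lemma phiV_opset x : exists n (hs : 'I_n -> G) (Ts : 'I_n -> Vs -> Vs),
  (forall i, hom_operator (Ts i) (hs i) /\ Sd (Ts i)) /\ forall v, phiV x v = \sum_(i < n) Ts i v.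
Proof.
have [n [gs [xs [H1 H2]]]] := decomp Rg x.
exists n, gs, (fun j => phiV (xs j)); split.
  by move=> j; split; [apply: phiV_hom|exists (xs j)].
by move=> v; rewrite H2 phiV_sum.
Qed.

Lemma HSd : graded_subring_LW Wd Sd.
Proof.
split.
- move=> T [x Hx]; split.
    have [n [hs [Ts [H1 H2]]]] := phiV_opset x.
    exists n, hs, Ts; split => [i|v]; [by case: (H1 i)|by rewrite Hx H2].
  move=> f [a [ea Hf]]; exists (rmul a x); split; first by rewrite rmulA ea.
  move=> v; apply: val_inj; rewrite Hf Hx !valWe ?rmulA ?ea //.
- by exists 0 => v; apply: val_inj; rewrite valAct rmul0r.
- move=> A B [x Hx] [y Hy]; exists (x - y) => v; apply: val_inj.
  by rewrite valVB' Hx Hy !valAct rmulBl.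
- move=> A B [x Hx] [y Hy]; exists (rmul x y) => v; apply: val_inj.
  by rewrite Hx Hy !valAct rmulA.
- move=> T [x Hx]; have [n [hs [Ts [H1 H2]]]] := phiV_opset x.
  by exists n, hs, Ts; split => // v; rewrite Hx H2.
Qed.

Lemma FSd : forall T, FW Wd T -> Sd T.
Proof.
move=> T [n [gs [hs [vs [ws [H1 H2]]]]]].
have [a Ha] := choice_fun (fun i => match H1 i with And3 _ Wi _ => Wi end).
exists (\sum_(i < n) rmul (val (vs i)) (a i)) => u; apply: val_inj.
rewrite H2 valVsum valAct rmul_suml; apply: eq_bigr => i _.
have [ea Hw] := Ha i.
by rewrite valSc Hw valWe // rmulA.
Qed.

Lemma Hisod : graded_iso_onto Sd phiV.
Proof.
split; split.
- by move=> x y v; apply: val_inj; rewrite valVD' !valAct rmulDl.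
- by move=> x y v; apply: val_inj; rewrite !valAct rmulA.
- move=> x y H; apply/eqP; rewrite -subr_eq0; apply/eqP; apply: Hinj => i Ii.
  have := f_equal val (H (Vc e i)); rewrite !valAct valVc HIe // => E.
  by rewrite rmulBl E subrr.
- by split => [x|T [x Hx]]; [exists x|exists x => v; rewrite Hx].
- exact: phiV_hom.
- move=> g T [y Hy] [t1 t2 t3].
  have [n [gs [ys [gi Hh E]]]] := decomp_inj Rg y.
  have Z : forall j, gs j <> g -> forall v : Vs, rmul (ys j) (val v) = 0.
    move=> j Hj.
    have Zh : forall k (v : Vs), vhomV k v -> rmul (ys j) (val v) = 0.
      move=> k v Hv.
      have [Z1 _] := extract Rg (gs := fun l => gmul (gs l) k) (xs := fun l => rmul (ys l) (val v))
        (g := gmul g k) (y := val (T v)) (fun a b E2 => gi _ _ (gcancelr E2))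
        (fun l => rhom_mul (Hh l) Hv) (t3 _ _ Hv) ltac:(by rewrite -rmul_suml -E Hy).
      by apply: Z1 => E2; apply: Hj; apply: gcancelr E2.
    move=> v; have [p [ks [vs [V1 V2]]]] := decomp Vgrading v.
    by rewrite V2 valVsum rmul_sumr; apply: big1 => l _; apply: (Zh _ _ (V1 l)).
  case: (classic (exists j, gs j = g)) => [[j0 Hj0]|Hn].
    exists (ys j0); split; first by rewrite -Hj0.
    move=> v; apply: val_inj; rewrite Hy !valAct E rmul_suml (bigD1 j0) //= big1 ?addr0 //.
    move=> j /eqP Hj; apply: Z => E2; apply: Hj; apply: gi; by rewrite E2.
  exists 0; split; first exact: (hom0 Rg).
  move=> v; apply: val_inj; rewrite Hy !valAct E rmul_suml rmul0r big1 // => j _.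
  by apply: Z => E2; apply: Hn; exists j.
Qed.

Lemma construct_main : exists (D : gdivring G) (V : gvspace D) (W : (V -> D) -> Prop),
     [/\ (exists v : V, v <> 0), graded_dual_subspace W, total_dual W &
       exists (S : (V -> V) -> Prop) (phi : R -> V -> V),
         [/\ graded_subring_LW W S, (forall T, FW W T -> S T) &
             graded_iso_onto S phi]].
Proof.
exists Dd, Vs, Wd; split.
- exists (Vc e e) => E; apply: e0; have := f_equal val E; by rewrite valVc Hee.
- exact: HWd.
- exact: HTd.
- exists Sd, phiV; split; [exact: HSd|exact: FSd|exact: Hisod].
Qed.
End Construct.


Section Fwd.
Variables (G : group) (R : gring G).

Lemma forward : graded_primitive R -> has_minimal_graded_left_ideal R ->
  exists (D : gdivring G) (V : gvspace D) (W : (V -> D) -> Prop),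
     [/\ (exists v : V, v <> 0), graded_dual_subspace W, total_dual W &
       exists (S : (V -> V) -> Prop) (phi : R -> V -> V),
         [/\ graded_subring_LW W S, (forall T, FW W T -> S T) &
             graded_iso_onto S phi]].
Proof.
move=> [M [Mf [_ Msub]]] [I [HI [x0 [Ix0 x00]] Imin]].
have Rg := rhom_grading R; have Mg := mhom_grading M.
have I0 : I 0 by case: HI.
have IB : forall x y, I x -> I y -> I (x - y) by case: HI.
have IL : forall r x, I x -> I (rmul r x) by case: HI.
have Igr : graded_subset (@rhom G R) I by case: HI.
have a0l : forall m : M, act 0 m = 0.
  by move=> m; apply: (add0 (f := fun r => act r m)) => r s; apply: actDl.
have a0r : forall r, act r (0 : M) = 0 by move=> r; apply: add0 => a b; apply: actDr.
have aBl : forall r s (m : M), act (r - s) m = act r m - act s m.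
  by move=> r s m; apply: (addB (f := fun r => act r m)) => a b; apply: actDl.
have asuml : forall n (xs : 'I_n -> R) (m : M), act (\sum_(i < n) xs i) m = \sum_(i < n) act (xs i) m.
  by move=> n xs m; apply: (add_sum (f := fun r => act r m)) => a b; apply: actDl.
have asumr : forall r n (xs : 'I_n -> M), act r (\sum_(i < n) xs i) = \sum_(i < n) act r (xs i).
  by move=> r n xs; apply: add_sum => a b; apply: actDr.
have [km [m [Hm xm]]] : exists km (m : M), mhom km m /\ act x0 m <> 0.
  have [m1 Hm1] : exists m1 : M, act x0 m1 <> 0.
    apply: NNPP => H; apply: x00; apply: Mf => m; apply: NNPP => H'; apply: H; by exists m.
  have [n [gs [ms [H1 H2]]]] := decomp Mg m1.
  rewrite H2 asumr in Hm1; have [i Hi] := sum_ne0 Hm1.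
  by exists (gs i), (ms i).
have m0 : m <> 0 by move=> E; apply: xm; rewrite E a0r.
pose Im (n : M) := exists i, I i /\ n = act i m.
have HIm : graded_submodule Im.
  split.
  - by exists 0; rewrite a0l.
  - by move=> a b [i [Ii ->]] [j [Ij ->]]; exists (i - j); split; [apply: (IB)|rewrite aBl].
  - by move=> r a [i [Ii ->]]; exists (rmul r i); split; [apply: (IL)|rewrite actA].
  - move=> a [i [Ii ->]]; have [n [gs [xs [H1 H2]]]] := Igr _ Ii.
    exists n, (fun j => gmul (gs j) km), (fun j => act (xs j) m); split; last by rewrite H2 asuml.
    move=> j; case: (H1 j) => h1 h2; split; first exact: mhom_act.
    by exists (xs j).
have ImAll : forall n, Im n.
  case: (Msub Im HIm) => // H; exfalso; apply: xm; apply: H; by exists x0.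
have [e' [Ie' Ee']] := ImAll m.
have Lz : forall i, I i -> act i m = 0 -> i = 0.
  pose L i := I i /\ act i m = 0.
  have HL : graded_left_ideal L.
    split.
    - by split => //; rewrite a0l.
    - by move=> i j [Ii Hi] [Ij Hj]; split; [apply: (IB)|rewrite aBl Hi Hj subrr].
    - by move=> r i [Ii Hi]; split; [apply: (IL)|rewrite actA Hi a0r].
    - move=> i [Ii Hi]; have [n [gs [xs [H1 H2]]]] := Igr _ Ii.
      have [p [gs' [xs' [gi Hh Hs]]]] := gmerge Rg I0 IB H1.
      exists p, gs', xs'; split; last by rewrite H2 Hs.
      move=> j; case: (Hh j) => h1 h2; do 2!split => //.
      apply: (indep Mg (gs := fun k => gmul (gs' k) km) (xs := fun k => act (xs' k) m)).
      + by move=> k1 k2 /gcancelr /gi.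
      + by move=> k; apply: mhom_act => //; case: (Hh k).
      + by rewrite -asuml -Hs -H2.
  move=> i Ii Hi; apply: NNPP => i0.
  have := Imin L HL (ex_intro _ i (conj (conj Ii Hi) i0)) (fun y Ly => proj1 Ly) e' Ie'.
  by case=> _ E; apply: m0; rewrite Ee'.
have [e [Ie He Em]] : exists e, [/\ I e, rhom (gone G) e & act e m = m].
  have [n [gs [xs [H1 H2]]]] := Igr _ Ie'.
  have [p [gs' [xs' [gi Hh Hs]]]] := gmerge Rg I0 IB H1.
  have [Z1 Z2] := extract Mg (gs := fun k => gmul (gs' k) km) (xs := fun k => act (xs' k) m)
    (g := km) (y := m) (fun a b E2 => gi _ _ (gcancelr E2)) (fun k => mhom_act (proj1 (Hh k)) Hm) Hm
    ltac:(by rewrite -asuml -Hs -H2).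
  case: (classic (exists j, gs' j = gone G)) => [[j Hj]|Hn].
    exists (xs' j); split; [by case: (Hh j)|by rewrite -Hj; case: (Hh j)|].
    by apply: Z2; rewrite Hj gmul1.
  exfalso; apply: m0; rewrite Ee' H2 Hs asuml; apply: big1 => k _; apply: Z1 => E2.
  by apply: Hn; exists k; apply: (@gcancelr _ _ _ km); rewrite gmul1.
have e0 : e <> 0 by move=> E; apply: m0; rewrite -Em E a0l.
have Hee : rmul e e = e.
  apply/eqP; rewrite -subr_eq0; apply/eqP; apply: (Lz); first by apply: (IB) => //; apply: (IL).
  by rewrite aBl actA !Em subrr.
have HIe : forall x, I x -> rmul x e = x.
  move=> x Ix; apply/eqP; rewrite eq_sym -subr_eq0; apply/eqP; apply: (Lz); first by apply: (IB) => //; apply: (IL).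
  by rewrite aBl actA Em subrr.
have Hinj : forall x, (forall i, I i -> rmul x i = 0) -> x = 0.
  move=> x H; apply: Mf => n; have [i [Ii ->]] := ImAll n.
  by rewrite -actA H // a0l.
exact: (construct_main HI He Hee e0 Ie HIe Imin Hinj).
Qed.
End Fwd.

Unset Implicit Arguments.
Theorem theorem3p3 (G : group) (R : gring G) :
  ((graded_primitive R /\ has_minimal_graded_left_ideal R) <->
   exists (D : gdivring G) (V : gvspace D) (W : (V -> D) -> Prop),
     [/\ (exists v : V, v <> 0), graded_dual_subspace W, total_dual W &
       exists (S : (V -> V) -> Prop) (phi : R -> V -> V),
         [/\ graded_subring_LW W S, (forall T, FW W T -> S T) &
             graded_iso_onto S phi]])
  /\
  (forall (D : gdivring G) (V : gvspace D) (W : (V -> D) -> Prop),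
     (exists v : V, v <> 0) -> graded_dual_subspace W -> total_dual W ->
     forall S : (V -> V) -> Prop,
       graded_subring_LW W S -> (forall T, FW W T -> S T) ->
       (graded_simple_opring S <-> forall T, S T <-> FW W T)).
Proof.
split.
  split; first by move=> [Hp Hm]; apply: forward.
  move=> [D [V [W [Hv HW HT [S [phi [HS FS Hiso]]]]]]].
  by split; [apply: (back_primitive Hv HW HT HS FS Hiso)|apply: (back_minimal Hv HW HT HS FS Hiso)].
by move=> D V W Hv HW HT S HS FS; apply: part2.
Qed.
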